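(* Let $n\ge 1$ and $1\le p\le n$. The number $F(n;p)$ of $\alpha\in\mathcal{ORCT}_n$ with $h(\alpha)=p$ equals $2(n-p+1)\binom{n-1}{p-1}$ if $p>1$, and equals $n$ if $p=1$.
   Context: $X_n=\{1,2,\dots,n\}$ with its usual order; maps are written on the right ($x\alpha$). A map $\alpha:X_n\to X_n$ is order-preserving if $x\le y$ implies $x\alpha\le y\alpha$, order-reversing if $x\le y$ implies $x\alpha\ge y\alpha$, and a contraction if $|x\alpha-y\alpha|\le|x-y|$ for all $x,y$. $\mathcal{ORCT}_n$ is the set of all maps $X_n\to X_n$ (defined on all of $X_n$) that are contractions and are either order-preserving or order-reversing. Height $h(\alpha)=|\mathrm{Im}\,\alpha|$. *)

(* Defs.v *)
(* X_n = {1..n} is modelled by 'I_n = {0..n-1} (shift by one,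
   which preserves order and distances). Maps X_n -> X_n are {ffun 'I_n -> 'I_n}. *)
From mathcomp Require Import all_boot all_order.
Set Implicit Arguments. Unset Strict Implicit. Unset Printing Implicit Defensive.

Definition distn (a b : nat) : nat := (a - b) + (b - a).

Definition order_preserving n (f : {ffun 'I_n -> 'I_n}) : bool :=
  [forall x : 'I_n, forall y : 'I_n, ((x : nat) <= y)%N ==> (f x <= f y)%N].

Definition order_reversing n (f : {ffun 'I_n -> 'I_n}) : bool :=
  [forall x : 'I_n, forall y : 'I_n, ((x : nat) <= y)%N ==> (f y <= f x)%N].

Definition contraction n (f : {ffun 'I_n -> 'I_n}) : bool :=
  [forall x : 'I_n, forall y : 'I_n, (distn (f x) (f y) <= distn x y)%N].

Definition ORCT n : {set {ffun 'I_n -> 'I_n}} :=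
  [set f | contraction f && (order_preserving f || order_reversing f)].

Definition height n (f : {ffun 'I_n -> 'I_n}) : nat := #|[set f x | x : 'I_n]|.

Definition F n p : nat := #|[set f in ORCT n | height f == p]|.

(* Main.v *)
Require Import Defs.
From mathcomp Require Import all_boot all_order.
From mathcomp Require Import zify.
Set Implicit Arguments. Unset Strict Implicit. Unset Printing Implicit Defensive.

Definition inS m (S : {set 'I_m}) (j : nat) : bool := [exists i in S, (i : nat) == j].
Definition cS m (S : {set 'I_m}) (x : nat) : nat := \sum_(0 <= j < x) inS S j.

Lemma cS0 m (S : {set 'I_m}) : cS S 0 = 0.
Proof. by rewrite /cS big_geq. Qed.

Lemma cSS m (S : {set 'I_m}) x : cS S x.+1 = cS S x + inS S x.
Proof. by rewrite /cS big_nat_recr. Qed.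

Lemma inS_ord m (S : {set 'I_m}) (i : 'I_m) : inS S i = (i \in S).
Proof.
apply/existsP/idP => [[j /andP[jS /eqP ji]]|iS].
  by have -> : i = j by apply: val_inj.
by exists i; rewrite iS eqxx.
Qed.

Lemma inS_Ord m (S : {set 'I_m}) x (Hx : x < m) : inS S x = (Ordinal Hx \in S).
Proof. by rewrite -inS_ord. Qed.

Lemma cS_step m (S : {set 'I_m}) x d : cS S x <= cS S (x + d) <= cS S x + d.
Proof.
elim: d => [|d IH]; first by rewrite !addn0 leqnn.
rewrite addnS cSS; case: (inS S (x+d)) => /=; rewrite ?addn0 ?addn1; lia.
Qed.

Lemma cS_mono m (S : {set 'I_m}) x y : x <= y -> cS S x <= cS S y <= cS S x + (y - x).
Proof. move=> hxy; have := cS_step S x (y - x); by rewrite subnKC. Qed.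

Lemma cS_m m (S : {set 'I_m}) : cS S m = #|S|.
Proof.
rewrite /cS big_mkord (eq_bigr (fun i : 'I_m => if i \in S then 1 else 0)); last first.
  by move=> i _; rewrite inS_ord; case: (i \in S).
by rewrite -big_mkcond /= sum1_card.
Qed.

Lemma cS_ivt m (S : {set 'I_m}) u t : t <= cS S u -> exists2 x, x <= u & cS S x = t.
Proof.
elim: u => [|u IH] ht.
  by exists 0 => //; move: ht; rewrite cS0 leqn0 => /eqP ->.
case: (leqP t (cS S u)) => h.
  by case: (IH h) => x xu <-; exists x => //; apply: leqW.
exists u.+1 => //; have := cS_step S u 1; rewrite addn1; lia.
Qed.

Lemma card_range N lo k : lo + k <= N.+1 ->
  #|[set y : 'I_N.+1 | lo <= y < lo + k]| = k.
Proof.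
move=> h.
have -> : [set y : 'I_N.+1 | lo <= y < lo + k] = [set inord (lo + i) | i : 'I_k].
  apply/setP => y; rewrite inE; apply/idP/imsetP.
    move=> /andP[h1 h2].
    have hk : y - lo < k by lia.
    exists (Ordinal hk) => //; apply: val_inj; rewrite /= inordK; lia.
  move=> [i _ ->]; rewrite inordK; have := ltn_ord i; lia.
rewrite card_imset ?card_ord // => i j /(congr1 val) /=.
have := ltn_ord i; have := ltn_ord j => hi hj.
rewrite !inordK; try lia.
by move=> /eqP; rewrite eqn_add2l => /eqP hij; apply: val_inj.
Qed.

Definition gfun m (aS : 'I_m.+1 * {set 'I_m}) : {ffun 'I_m.+1 -> 'I_m.+1} :=
  [ffun x : 'I_m.+1 => inord (aS.1 + cS aS.2 x)].

Lemma cS_le m (S : {set 'I_m}) (x : nat) : x <= m -> cS S x <= #|S|.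
Proof. by move=> hx; have := cS_mono S hx; rewrite cS_m => /andP[]. Qed.

Lemma gval m (aS : 'I_m.+1 * {set 'I_m}) (x : 'I_m.+1) :
  aS.1 + #|aS.2| <= m -> (gfun aS x : nat) = aS.1 + cS aS.2 x.
Proof.
move=> h; rewrite ffunE inordK //.
have := cS_le aS.2 (ltnSE (ltn_ord x)); lia.
Qed.

Lemma g_contr m (aS : 'I_m.+1 * {set 'I_m}) : aS.1 + #|aS.2| <= m -> contraction (gfun aS).
Proof.
move=> h; apply/forallP => x; apply/forallP => y; rewrite !gval // /distn.
case: (leqP x y) => hxy.
  have := cS_mono aS.2 hxy; lia.
have := cS_mono aS.2 (ltnW hxy); lia.
Qed.

Lemma g_op m (aS : 'I_m.+1 * {set 'I_m}) : aS.1 + #|aS.2| <= m -> order_preserving (gfun aS).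
Proof.
move=> h; apply/forallP => x; apply/forallP => y; apply/implyP => hxy; rewrite !gval //.
have := cS_mono aS.2 hxy; lia.
Qed.

Lemma g_height m (aS : 'I_m.+1 * {set 'I_m}) : aS.1 + #|aS.2| <= m -> height (gfun aS) = #|aS.2|.+1.
Proof.
move=> h; rewrite /height.
have -> : [set gfun aS x | x : 'I_m.+1] = [set y : 'I_m.+1 | aS.1 <= y < aS.1 + #|aS.2|.+1].
  apply/setP => y; rewrite inE; apply/imsetP/idP.
    move=> [x _ ->]; rewrite gval //; have := cS_le aS.2 (ltnSE (ltn_ord x)); lia.
  move=> /andP[h1 h2].
  have ht : y - aS.1 <= cS aS.2 m by rewrite cS_m; lia.
  case: (cS_ivt ht) => x xm hx.
  exists (inord x) => //; apply: val_inj => /=; rewrite gval // inordK; lia.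
by rewrite card_range //; lia.
Qed.

Definition Sof m (f : {ffun 'I_m.+1 -> 'I_m.+1}) : {set 'I_m} :=
  [set i : 'I_m | f (inord i.+1) != f (inord i)].

Lemma op_char m (f : {ffun 'I_m.+1 -> 'I_m.+1}) :
  contraction f -> order_preserving f ->
  (f ord0 : nat) + #|Sof f| <= m /\ f = gfun (f ord0, Sof f).
Proof.
move=> /forallP hc /forallP hop.
pose fn j := (f (inord j) : nat).
have step : forall j, j < m -> fn j <= fn j.+1 <= fn j + 1.
  move=> j hj.
  have := hop (inord j) => /forallP /(_ (inord j.+1)) /implyP.
  rewrite !inordK; try lia => /(_ (leqnSn j)) h1.
  have := hc (inord j) => /forallP /(_ (inord j.+1)).
  rewrite /distn !inordK; try lia.
  rewrite /fn; lia.
have f0 : fn 0 = f ord0.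
  by rewrite /fn; congr (nat_of_ord (f _)); apply: val_inj; rewrite /= inordK.
have claim : forall x, x <= m -> fn x = fn 0 + cS (Sof f) x.
  elim => [|x IH] hx; first by rewrite cS0 addn0.
  rewrite cSS addnA -IH; last by lia.
  rewrite (inS_Ord _ hx) inE /=.
  have := step x hx; rewrite /fn.
  case: eqP => [->|/eqP hne] /=; first lia.
  have hne' : (f (inord x.+1) : nat) != f (inord x) by [].
  lia.
have fm := claim m (leqnn m).
split.
  rewrite -cS_m -f0 -fm /fn.
  have := ltn_ord (f (inord m)); lia.
apply/ffunP => x; apply: val_inj => /=; rewrite gval /=; last first.
  rewrite -cS_m -f0 -fm /fn.
  have := ltn_ord (f (inord m)); lia.
rewrite -f0 -claim; last by have := ltn_ord x; lia.
by rewrite /fn inord_val.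
Qed.

Definition OPh m p : {set {ffun 'I_m.+1 -> 'I_m.+1}} :=
  [set f | [&& contraction f, order_preserving f & height f == p]].

Definition Dom m k := [set aS : 'I_m.+1 * {set 'I_m} | (aS.1 + k <= m) && (#|aS.2| == k)].

Lemma g_inj m k : {in Dom m k &, injective (@gfun m)}.
Proof.
move=> [a S] [a' S']; rewrite !inE /= => /andP[h1 /eqP h2] /andP[h1' /eqP h2'] E.
have hv : forall x : 'I_m.+1, a + cS S x = a' + cS S' x.
  move=> x; rewrite -(@gval m (a, S)) /=; last lia.
  by rewrite -(@gval m (a', S')) /= ?E //; lia.
have ha : a = a' by apply: val_inj; have := hv ord0; rewrite /= !cS0 !addn0.
subst a'.
have hc : forall x, x <= m -> cS S x = cS S' x.
  move=> x hx; have := hv (inord x); rewrite inordK; last lia.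
  by move/eqP; rewrite eqn_add2l => /eqP.
congr (_, _); apply/setP => i; rewrite -!inS_ord.
have := hc i.+1 (ltn_ord i); have := hc i (ltnW (ltn_ord i)); rewrite !cSS => ->.
by move/addnI; case: (inS S i); case: (inS S' i).
Qed.

Lemma OPh_img m k : OPh m k.+1 = (@gfun m) @: Dom m k.
Proof.
apply/setP => f; rewrite inE; apply/idP/imsetP.
  move=> /and3P[hc hop /eqP hh].
  have [hb E] := op_char hc hop.
  exists (f ord0, Sof f) => //.
  move: hh; rewrite {1}E g_height // => -[hk].
  by rewrite inE /= hk eqxx andbT -hk.
move=> [aS]; rewrite inE => /andP[h1 /eqP h2] ->.
have hb : aS.1 + #|aS.2| <= m by rewrite h2.
by rewrite g_contr // g_op // g_height // h2 eqxx.
Qed.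

Lemma card_OPh m k : k <= m -> #|OPh m k.+1| = (m - k + 1) * 'C(m, k).
Proof.
move=> hk; rewrite OPh_img card_in_imset; last exact: g_inj.
have -> : Dom m k = setX [set a : 'I_m.+1 | 0 <= a < 0 + (m - k + 1)] [set S : {set 'I_m} | #|S| == k].
  apply/setP => -[a S]; rewrite !inE /=; congr (_ && _); apply/idP/idP; lia.
by rewrite cardsX card_range ?card_draws ?card_ord //; lia.
Qed.

Definition revf m (f : {ffun 'I_m.+1 -> 'I_m.+1}) : {ffun 'I_m.+1 -> 'I_m.+1} :=
  [ffun x => rev_ord (f x)].

Lemma revfK m : cancel (@revf m) (@revf m).
Proof. by move=> f; apply/ffunP => x; rewrite !ffunE rev_ordK. Qed.

Lemma revf_contr m (f : {ffun 'I_m.+1 -> 'I_m.+1}) : contraction (revf f) = contraction f.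
Proof.
apply: eq_forallb => x; apply: eq_forallb => y; rewrite !ffunE /= /distn.
have := ltn_ord (f x); have := ltn_ord (f y) => h1 h2.
congr (_ <= _); lia.
Qed.

Lemma revf_or m (f : {ffun 'I_m.+1 -> 'I_m.+1}) : order_reversing (revf f) = order_preserving f.
Proof.
apply: eq_forallb => x; apply: eq_forallb => y; rewrite !ffunE /=.
have := ltn_ord (f x); have := ltn_ord (f y) => h1 h2.
congr (_ ==> _); apply/idP/idP; lia.
Qed.

Lemma revf_height m (f : {ffun 'I_m.+1 -> 'I_m.+1}) : height (revf f) = height f.
Proof.
rewrite /height.
have -> : [set revf f x | x : 'I_m.+1] = (@rev_ord m.+1) @: [set f x | x : 'I_m.+1].
  by rewrite -imset_comp; apply: eq_imset => x; rewrite ffunE.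
by rewrite card_imset //; apply: (@rev_ord_inj m.+1).
Qed.

Definition ORh m p : {set {ffun 'I_m.+1 -> 'I_m.+1}} :=
  [set f | [&& contraction f, order_reversing f & height f == p]].

Lemma ORh_img m p : ORh m p = (@revf m) @: OPh m p.
Proof.
apply/setP => f; rewrite inE; apply/idP/imsetP.
  move=> hf; exists (revf f); last by rewrite revfK.
  by rewrite inE -revf_contr -revf_or revf_height revfK.
move=> [g]; rewrite inE => hg ->.
by rewrite revf_contr revf_or revf_height.
Qed.

Lemma card_ORh m p : #|ORh m p| = #|OPh m p|.
Proof. by rewrite ORh_img card_imset //; apply: can_inj (@revfK m). Qed.

Lemma both_const m (f : {ffun 'I_m.+1 -> 'I_m.+1}) :
  order_preserving f -> order_reversing f -> height f = 1.
Proof.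
move=> /forallP hp /forallP hr; rewrite /height.
have -> : [set f x | x : 'I_m.+1] = [set f ord0].
  apply/setP => y; rewrite inE; apply/imsetP/eqP.
    move=> [x _ ->]; apply: val_inj; apply/eqP; rewrite eqn_leq.
    have := hp ord0 => /forallP /(_ x) /implyP /(_ (leq0n _)) ->.
    by have := hr ord0 => /forallP /(_ x) /implyP /(_ (leq0n _)) ->.
  by move=> ->; exists ord0.
by rewrite cards1.
Qed.

Lemma h1_const m (f : {ffun 'I_m.+1 -> 'I_m.+1}) :
  height f = 1 -> order_preserving f && order_reversing f.
Proof.
move=> /eqP /cards1P [y hy].
have E : forall x, f x = y.
  by move=> x; apply/set1P; rewrite -hy; apply: imset_f.
by apply/andP; split; apply/forallP => x; apply/forallP => z; rewrite !E leqnn implybT.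
Qed.

Theorem corollary3p4 (n p : nat) (hn : 1 <= n) (hp1 : 1 <= p) (hpn : p <= n) :
  F n p = (if 1 < p then 2 * (n - p + 1) * 'C(n - 1, p - 1) else n).
Proof.
case: n hn hpn => [//|m] _ hpn; case: p hp1 hpn => [//|k] _ hpn.
have hk : k <= m by [].
have E : [set f in ORCT m.+1 | height f == k.+1] = OPh m k.+1 :|: ORh m k.+1.
  apply/setP => f; rewrite !inE.
  by case: (height f == k.+1); rewrite ?andbT ?andbF // andb_orr.
rewrite /F E cardsU card_ORh card_OPh // subSS subn1 /=.
clear E; case: k hk hpn => [|k] hk hpn /=.
  have -> : OPh m 1 :&: ORh m 1 = OPh m 1.
    apply/setP => f; rewrite !inE.
    case: (boolP (height f == 1)) => [/eqP h|]; last by rewrite !andbF.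
    by have /andP[-> ->] := h1_const h; rewrite !andbT andbb.
  rewrite card_OPh // bin0 subn0 muln1 addn1; lia.
have -> : OPh m k.+2 :&: ORh m k.+2 = set0.
  apply/setP => f; rewrite !inE.
  apply/negP => /andP[/and3P[_ hp _] /and3P[_ hr /eqP hh]].
  by move: hh; rewrite both_const.
rewrite cards0 subn0 -mulnA mul2n -addnn; congr (_ * _ + _ * _).
Qed.
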